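(* Let $\varphi$ be a closed recHML formula. If there is a reactive monitor (possibly containing $\otimes,\oplus$) that is sound and violation-complete (resp. satisfaction-complete) for $\varphi$ over finfinite traces, then there is some $\psi\in\mathrm{sHML}$ (resp. $\psi\in\mathrm{cHML}$) with $[\![\psi]\!]_F=[\![\varphi]\!]_F$.
   Context: Fix a finite set $\mathrm{Act}$ of actions, $\tau\notin\mathrm{Act}$. recHML formulae: $\varphi::=\mathrm{tt}\mid\mathrm{ff}\mid\varphi\vee\varphi\mid\varphi\wedge\varphi\mid\langle A\rangle\varphi\mid[A]\varphi\mid\min X.\varphi\mid\max X.\varphi\mid X$ ($A\subseteq\mathrm{Act}$), guarded. $\mathrm{sHML}$: $\varphi::=\mathrm{tt}\mid\mathrm{ff}\mid[A]\varphi\mid\varphi\wedge\varphi\mid\max X.\varphi\mid X$; $\mathrm{cHML}$: $\varphi::=\mathrm{tt}\mid\mathrm{ff}\mid\langle A\rangle\varphi\mid\varphi\vee\varphi\mid\min X.\varphi\mid X$. Finfinite traces $\mathrm{Fin}=\mathrm{Act}^\omega\cup\mathrm{Act}^*$; finfinite semantics: $[\![\mathrm{tt}]\!]_F=\mathrm{Fin}$, $[\![\mathrm{ff}]\!]_F=\emptyset$, $\vee,\wedge$ union/intersection, $[\![\langle A\rangle\varphi,\sigma]\!]_F=\{ag\mid a\in A,g\in[\![\varphi,\sigma]\!]_F\}$, $[\![[A]\varphi,\sigma]\!]_F=\{g\mid\forall a\in A,\forall g'.\ g=ag'\Rightarrow g'\in[\![\varphi,\sigma]\!]_F\}$, $\min/\max$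 as least/greatest fixpoints, $[\![X,\sigma]\!]_F=\sigma(X)$. Monitors: $m,n::=v\mid a.m\mid m+n\mid\mathrm{rec}\,x.m\mid x\mid m\otimes n\mid m\oplus n$, verdicts $v::=\mathrm{end}\mid\mathrm{no}\mid\mathrm{yes}$, transitions ($\mu\in\mathrm{Act}\cup\{\tau\}$, $a\in\mathrm{Act}$, $\odot\in\{\otimes,\oplus\}$): $a.m\xrightarrow{a}m$; $\mathrm{rec}\,x.m\xrightarrow{\tau}m[\mathrm{rec}\,x.m/x]$; if $m\xrightarrow{\mu}m'$ then $m+n\xrightarrow{\mu}m'$ and $n+m\xrightarrow{\mu}m'$; $v\xrightarrow{a}v$; if $m\xrightarrow{a}m'$ and $n\xrightarrow{a}n'$ then $m\odot n\xrightarrow{a}m'\odot n'$; if $m\xrightarrow{\tau}m'$ then $m\odot n\xrightarrow{\tau}m'\odot n$ and $n\odot m\xrightarrow{\tau}n\odot m'$; $\mathrm{end}\odot\mathrm{end}\xrightarrow{\tau}\mathrm{end}$; $\mathrm{yes}\otimes m\xrightarrow{\tau}m$, $\mathrm{no}\otimes m\xrightarrow{\tau}\mathrm{no}$, $\mathrm{no}\oplus m\xrightarrow{\tau}m$, $\mathrm{yes}\oplus m\xrightarrow{\tau}\mathrm{yes}$, and symmetric versions. Weak transitions as usual. A monitor is reactive if every state reachable from it can weakly perform every $a\in\mathrm{Act}$. $m$ rejects (accepts) $s\in\mathrm{Act}^*$ iff $m\overset{s}{\Longrightarrow}\mathrm{no}$ ($\mathrm{yes}$), and rejects (accepts) $g\in\mathrm{Fin}$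 iff it rejects (accepts) some finite prefix of $g$. $m$ is sound for $\varphi$ over finfinite traces if for all $g\in\mathrm{Fin}$, rejecting $g$ implies $g\notin[\![\varphi]\!]_F$ and accepting $g$ implies $g\in[\![\varphi]\!]_F$; violation-complete if $g\notin[\![\varphi]\!]_F$ implies $m$ rejects $g$; satisfaction-complete if $g\in[\![\varphi]\!]_F$ implies $m$ accepts $g$. *)

(* Defs.v *)
From mathcomp Require Import all_boot.
Set Implicit Arguments. Unset Strict Implicit. Unset Printing Implicit Defensive.

Section Defs.
Variable Act : finType.

Inductive form : Type :=
| Tt | Ff
| Or  of form & form
| And of form & form
| Dia of {set Act} & form
| Box of {set Act} & form
| Min of nat & form
| Max of nat & form
| FVar of nat.

Fixpoint closed_in (bs : seq nat) (p : form) : Prop :=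
  match p with
  | Tt | Ff => True
  | Or p q | And p q => closed_in bs p /\ closed_in bs q
  | Dia _ p | Box _ p => closed_in bs p
  | Min X p | Max X p => closed_in (X :: bs) p
  | FVar X => X \in bs
  end.
Definition closedF (p : form) : Prop := closed_in [::] p.

(* every free occurrence of X in p lies under a modality *)
Fixpoint guarded_in (X : nat) (p : form) : Prop :=
  match p with
  | Tt | Ff => True
  | Or p q | And p q => guarded_in X p /\ guarded_in X q
  | Dia _ _ | Box _ _ => True
  | Min Y p | Max Y p => Y = X \/ guarded_in X p
  | FVar Y => Y <> X
  end.

Fixpoint guarded (p : form) : Prop :=
  match p with
  | Tt | Ff | FVar _ => True
  | Or p q | And p q => guarded p /\ guarded q
  | Dia _ p | Box _ p => guarded p
  | Min X p | Max X p => guarded_in X p /\ guarded p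
  end.

Fixpoint is_sHML (p : form) : Prop :=
  match p with
  | Tt | Ff | FVar _ => True
  | Box _ p | Max _ p => is_sHML p
  | And p q => is_sHML p /\ is_sHML q
  | _ => False
  end.

Fixpoint is_cHML (p : form) : Prop :=
  match p with
  | Tt | Ff | FVar _ => True
  | Dia _ p | Min _ p => is_cHML p
  | Or p q => is_cHML p /\ is_cHML q
  | _ => False
  end.

Inductive ftrace : Type :=
| FinT of seq Act
| InfT of (nat -> Act).

Definition fhead (g : ftrace) : option Act :=
  match g with
  | FinT [::] => None
  | FinT (a :: _) => Some a
  | InfT f => Some (f 0)
  end.

Definition ftail (g : ftrace) : ftrace :=
  match g with
  | FinT [::] => FinT [::]
  | FinT (_ :: s) => FinT s
  | InfT f => InfT (fun n => f n.+1)
  end.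

(* g = a g'  iff  fhead g = Some a and g' = ftail g *)

Definition tset := ftrace -> Prop.
Definition env := nat -> tset.
Definition upd (sigma : env) (X : nat) (S : tset) : env :=
  fun Y => if Y == X then S else sigma Y.

(* finfinite semantics; min/max are least/greatest fixpoints
   (intersection of prefixed points / union of postfixed points) *)
Fixpoint sem (p : form) (sigma : env) : tset :=
  match p with
  | Tt => fun _ => True
  | Ff => fun _ => False
  | Or p q => fun g => sem p sigma g \/ sem q sigma g
  | And p q => fun g => sem p sigma g /\ sem q sigma g
  | Dia A p => fun g => exists a, a \in A /\ fhead g = Some a /\ sem p sigma (ftail g)
  | Box A p => fun g => forall a, a \in A -> fhead g = Some a -> sem p sigma (ftail g)
  | Min X p => fun g =>
      forall S : tset, (forall h, sem p (upd sigma X S) h -> S h) -> S g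
  | Max X p => fun g =>
      exists S : tset, (forall h, S h -> sem p (upd sigma X S) h) /\ S g
  | FVar X => sigma X
  end.

Definition empty_env : env := fun _ _ => False.
Definition semF (p : form) : tset := sem p empty_env.

Inductive verdict := VEnd | VNo | VYes.
Inductive parop := PAnd | POr .

Inductive mon : Type :=
| MV of verdict
| MPre of Act & mon
| MSum of mon & mon
| MRec of nat & mon
| MVar of nat
| MPar of parop & mon & mon.

(* substitution m[n/x] (n will always be the closed term rec x.m) *)
Fixpoint msubst (m : mon) (x : nat) (n : mon) : mon :=
  match m with
  | MV v => MV v
  | MPre a m => MPre a (msubst m x n)
  | MSum m1 m2 => MSum (msubst m1 x n) (msubst m2 x n)
  | MRec y m1 => if y == x then MRec y m1 else MRec y (msubst m1 x n)
  | MVar y => if y == x then n else MVar y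
  | MPar o m1 m2 => MPar o (msubst m1 x n) (msubst m2 x n)
  end.

(* labels: Some a = action a, None = tau *)
Inductive step : mon -> option Act -> mon -> Prop :=
| sPre a m : step (MPre a m) (Some a) m
| sRec x m : step (MRec x m) None (msubst m x (MRec x m))
| sSumL m n mu m' : step m mu m' -> step (MSum m n) mu m'
| sSumR m n mu m' : step m mu m' -> step (MSum n m) mu m'
| sVerd v a : step (MV v) (Some a) (MV v)
| sParA o m n m' n' a :
    step m (Some a) m' -> step n (Some a) n' -> step (MPar o m n) (Some a) (MPar o m' n')
| sParTL o m n m' : step m None m' -> step (MPar o m n) None (MPar o m' n)
| sParTR o m n m' : step m None m' -> step (MPar o n m) None (MPar o n m')
| sEnd o : step (MPar o (MV VEnd) (MV VEnd)) None (MV VEnd)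
| sYesAndL m : step (MPar PAnd (MV VYes) m) None m
| sYesAndR m : step (MPar PAnd m (MV VYes)) None m
| sNoAndL m : step (MPar PAnd (MV VNo) m) None (MV VNo)
| sNoAndR m : step (MPar PAnd m (MV VNo)) None (MV VNo)
| sNoOrL m : step (MPar POr (MV VNo) m) None m
| sNoOrR m : step (MPar POr m (MV VNo)) None m
| sYesOrL m : step (MPar POr (MV VYes) m) None (MV VYes)
| sYesOrR m : step (MPar POr m (MV VYes)) None (MV VYes).

Inductive wtau : mon -> mon -> Prop :=
| wt_refl m : wtau m m
| wt_step m m1 m' : step m None m1 -> wtau m1 m' -> wtau m m'.

Definition wstep (m : mon) (a : Act) (m' : mon) : Prop :=
  exists m1 m2, wtau m m1 /\ step m1 (Some a) m2 /\ wtau m2 m'.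

Inductive wtrace : mon -> seq Act -> mon -> Prop :=
| wtr_nil m m' : wtau m m' -> wtrace m [::] m'
| wtr_cons m a m1 s m' : wstep m a m1 -> wtrace m1 s m' -> wtrace m (a :: s) m'.

Definition reactive (m : mon) : Prop :=
  forall s m', wtrace m s m' -> forall a : Act, exists m'', wstep m' a m''.

Definition is_prefix (s : seq Act) (g : ftrace) : Prop :=
  match g with
  | FinT t => exists t', t = s ++ t'
  | InfT f => s = [seq f i | i <- iota 0 (size s)]
  end.

Definition rejects (m : mon) (g : ftrace) : Prop :=
  exists s, is_prefix s g /\ wtrace m s (MV VNo).
Definition accepts (m : mon) (g : ftrace) : Prop :=
  exists s, is_prefix s g /\ wtrace m s (MV VYes).

Definition sound (m : mon) (p : form) : Prop :=
  forall g, (rejects m g -> ~ semF p g) /\ (accepts m g -> semF p g).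
Definition viol_complete (m : mon) (p : form) : Prop :=
  forall g, ~ semF p g -> rejects m g.
Definition sat_complete (m : mon) (p : form) : Prop :=
  forall g, semF p g -> accepts m g.

End Defs.

(* Main.v *)
Require Import Defs.
From mathcomp Require Import all_boot.
From Stdlib Require Import Classical ClassicalEpsilon.
From Stdlib Require List.
From Stdlib Require Import Lia.
From mathcomp Require Import zify.
Set Implicit Arguments. Unset Strict Implicit. Unset Printing Implicit Defensive.

Section Gen.
Variable Act : finType.
Implicit Types (p q : form Act) (sigma : env Act) (g h : ftrace Act) (s t : seq Act).

Definition tsub (S S' : tset Act) := forall g, S g -> S' g.

Lemma upd_mono sigma sigma' X S S' :
  (forall Y, tsub (sigma Y) (sigma' Y)) -> tsub S S' ->
  forall Y, tsub (upd sigma X S Y) (upd sigma' X S' Y).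
Proof. move=> H HS Y; rewrite /upd; case: (Y == X); [exact: HS | exact: H]. Qed.

Lemma sem_mono p : forall sigma sigma', (forall Y, tsub (sigma Y) (sigma' Y)) ->
  tsub (sem p sigma) (sem p sigma').
Proof.
elim: p => [||p IHp q IHq|p IHp q IHq|A p IHp|A p IHp|X p IHp|X p IHp|X]
  sigma sigma' H g /=.
- done.
- done.
- by case=> h; [left; apply: (IHp sigma sigma' H) | right; apply: (IHq sigma sigma' H)].
- by case=> h1 h2; split; [apply: (IHp _ _ H) | apply: (IHq _ _ H)].
- case=> a [Ha [Hh Hs]]; exists a; split => //; split => //; exact: (IHp _ _ H).
- move=> Hb a Ha Hh; exact: (IHp _ _ H _ (Hb a Ha Hh)).
- move=> Hm S HS; apply: Hm => k Hk; apply: HS.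
  apply: (IHp (upd sigma X S) (upd sigma' X S) _ _ Hk); exact: upd_mono.
- case=> S [HS Hg]; exists S; split => // k /HS; apply: IHp; exact: upd_mono.
- exact: H.
Qed.

Lemma unfold_min X p sigma g :
  sem (Min X p) sigma g <-> sem p (upd sigma X (sem (Min X p) sigma)) g.
Proof.
have FUU : tsub (sem p (upd sigma X (sem (Min X p) sigma))) (sem (Min X p) sigma).
  move=> k Hk S HS; apply: (HS); move: (Hk); apply: sem_mono.
  apply: upd_mono; first by move=> ? ?. move=> k' Uk'; exact: Uk' S HS.
split; last exact: FUU.
move=> Ug; apply: Ug => k Hk; move: (Hk); apply: sem_mono.
apply: upd_mono; [by move=> ? ? | exact: FUU].
Qed.

Lemma unfold_max X p sigma g :
  sem (Max X p) sigma g <-> sem p (upd sigma X (sem (Max X p) sigma)) g.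
Proof.
have VFV : tsub (sem (Max X p) sigma) (sem p (upd sigma X (sem (Max X p) sigma))).
  move=> k [S [HS Sk]]; move: (HS _ Sk); apply: sem_mono.
  apply: upd_mono; first by move=> ? ?. move=> k' Sk'; by exists S.
split; first exact: VFV.
move=> Fg; exists (sem p (upd sigma X (sem (Max X p) sigma))); split => // k Hk.
move: (Hk); apply: sem_mono; apply: upd_mono; [by move=> ? ? | exact: VFV].
Qed.

Lemma pre_nil g : is_prefix [::] g.
Proof. by case: g => [t|f] //=; exists t. Qed.

Lemma pre_cons a s g :
  is_prefix (a :: s) g <-> fhead g = Some a /\ is_prefix s (ftail g).
Proof.
case: g => [[|b t]|f] /=.
- by split; [case=> t' |case].
- split; first by case=> t' [-> ->]; split => //; exists t'.
  by case=> [[->]] [t' ->]; exists t'.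
- have E : [seq f i | i <- iota 1 (size s)] = [seq f i.+1 | i <- iota 0 (size s)].
    by rewrite -[1]/(1 + 0) iotaDl -map_comp.
  rewrite E; split; first by move=> [-> Hs].
  by move=> [[<-] Hs]; rewrite -Hs.
Qed.

Lemma pre_self s : is_prefix s (FinT s).
Proof. by exists [::]; rewrite cats0. Qed.

Lemma pre_trans s' s g : is_prefix s' (FinT s) -> is_prefix s g -> is_prefix s' g.
Proof.
elim: s' s g => [|a s' IH] s g; first by move=> _ _; exact: pre_nil.
move/pre_cons=> [H1 H2]; case: s H1 H2 => [|b s] //= [<-] H2 /pre_cons [H3 H4].
apply/pre_cons; split => //; exact: IH H2 H4.
Qed.

End Gen.

Section Build.
Variable Act : finType.
Variables (Q : finType) (dl : Q -> Act -> Q) (ac : Q -> bool).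
Implicit Types (p q : form Act) (sigma : env Act) (g h : ftrace Act) (s t : seq Act).

Definition code (x : Q) : nat := enum_rank x.
Lemma code_inj : injective code.
Proof. move=> x y /ord_inj; exact: enum_rank_inj. Qed.

Definition run (x : Q) s := foldl dl x s.

Definition bigAnd (l : seq (form Act)) := foldr (fun f r => And f r) (Tt Act) l.
Definition bigOr (l : seq (form Act)) := foldr (fun f r => Or f r) (Ff Act) l.

Lemma sem_bigAnd (F : Act -> form Act) (l : seq Act) sigma g :
  sem (bigAnd [seq F a | a <- l]) sigma g <-> (forall a, a \in l -> sem (F a) sigma g).
Proof.
elim: l => [|b l IH] /=; first by split.
rewrite IH; split.
- by case=> H1 H2 a; rewrite in_cons => /orP [/eqP ->|]; [ | exact: H2].
- by move=> H; split; [apply: H; rewrite mem_head | move=> a Ha; apply: H; rewrite in_cons Ha orbT].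
Qed.

Lemma sem_bigOr (F : Act -> form Act) (l : seq Act) sigma g :
  sem (bigOr [seq F a | a <- l]) sigma g <-> (exists a, a \in l /\ sem (F a) sigma g).
Proof.
elim: l => [|b l IH] /=; first by split => // [[a []]].
rewrite IH; split.
- case=> [H|[a [Ha H]]]; first by exists b; rewrite mem_head.
  by exists a; rewrite in_cons Ha orbT.
- case=> a []; rewrite in_cons => /orP [/eqP -> H|Ha H]; first by left.
  by right; exists a.
Qed.

Lemma mem_enumT (a : Act) : a \in enum Act.
Proof. by rewrite mem_enum. Qed.

Fixpoint bS (k : nat) (vis : seq Q) (x : Q) : form Act :=
  if x \in vis then FVar Act (code x) else
  match k with
  | 0 => Tt Act
  | k.+1 => Max (code x) (And (if ac x then Tt Act else Ff Act)
              (bigAnd [seq Box [set a] (bS k (x :: vis) (dl x a)) | a <- enum Act]))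
  end.

Fixpoint bC (k : nat) (vis : seq Q) (x : Q) : form Act :=
  if x \in vis then FVar Act (code x) else
  match k with
  | 0 => Ff Act
  | k.+1 => Min (code x) (Or (if ac x then Tt Act else Ff Act)
              (bigOr [seq Dia [set a] (bC k (x :: vis) (dl x a)) | a <- enum Act]))
  end.

Definition Good (x : Q) g := forall s, is_prefix s g -> ac (run x s).
Definition GoodN n (x : Q) g := forall s, size s <= n -> is_prefix s g -> ac (run x s).
Definition GoodE (x : Q) g := exists s, is_prefix s g /\ ac (run x s).
Definition GoodEN n (x : Q) g := exists s, [/\ size s <= n, is_prefix s g & ac (run x s)].

Lemma notin_full k (vis : seq Q) x : uniq vis -> #|Q| <= k + size vis ->
  x \notin vis -> k = 0 -> False.
Proof.
move=> Hu Hc Hx Hk; subst k.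
have Hu' : uniq (x :: vis) by rewrite /= Hx Hu.
have := max_card (mem (x :: vis)).
rewrite (card_uniqP Hu') /= add0n in Hc *; move=> H; have := leq_trans H Hc; by rewrite ltnn.
Qed.

Lemma upd_vis sigma x (S : tset Act) (vis : seq Q) y :
  y \in x :: vis -> upd sigma (code x) S (code y) = if y == x then S else sigma (code y).
Proof.
move=> _; rewrite /upd; case: (eqVneq y x) => [->|Hne]; first by rewrite eqxx.
by case: eqP => // /code_inj E; rewrite E eqxx in Hne.
Qed.

Lemma bS_correct k : forall vis x sigma, uniq vis -> #|Q| <= k + size vis ->
  ((forall y, y \in vis -> tsub (Good y) (sigma (code y))) ->
     tsub (Good x) (sem (bS k vis x) sigma)) /\
  (forall n, (forall y, y \in vis -> tsub (sigma (code y)) (GoodN n y)) ->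
     tsub (sem (bS k vis x) sigma) (GoodN n x)).
Proof.
elim: k => [|k IH] vis x sigma Hu Hc /=.
  case: ifP => Hx; first by split => [H|n H]; apply: H.
  by exfalso; apply: (notin_full Hu Hc (negbT Hx)).
case: ifP => Hx; first by split => [H|n H]; apply: H.
have Hu' : uniq (x :: vis) by rewrite /= Hx Hu.
have Hc' : #|Q| <= k + size (x :: vis) by rewrite /= addnS.
split.
- move=> Hvis g Hg; exists (Good x); split => // h Hh /=; split.
    by have := Hh [::] (pre_nil _); rewrite /run /= => ->.
  apply/sem_bigAnd => a _ b; rewrite in_set1 => /eqP -> Hhd.
  apply: (proj1 (IH (x :: vis) (dl x a) (upd sigma (code x) (Good x)) Hu' Hc')).
    move=> y Hy; rewrite (upd_vis _ _ Hy); case: eqP => [->|Hne] //.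
    by apply: Hvis; move: Hy; rewrite in_cons => /orP [/eqP|].
  move=> s Hs; apply: (Hh (a :: s)); exact/pre_cons.
- move=> n Hvis g [S [HS Sg]].
  suff : forall m, m <= n -> tsub S (GoodN m x) by move/(_ n (leqnn n)); apply.
  elim=> [|m IHm] Hm h Sh s; case: s => [|a s] //.
  + by move=> _ _; have := HS _ Sh => /= [[]]; case: (ac x).
  + by move=> _ _; have := HS _ Sh => /= [[]]; case: (ac x).
  move=> Hs /pre_cons [Hhd Hpre].
  have [_ /sem_bigAnd Hb] := HS _ Sh.
  have := Hb a (mem_enumT a) a (set11 a) Hhd.
  move/(proj2 (IH (x :: vis) (dl x a) (upd sigma (code x) S) Hu' Hc') m).
  apply => //.
  move=> y Hy; rewrite (upd_vis _ _ Hy); case: eqP => [->|Hne].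
    by apply: IHm; apply: ltnW.
  have Hy' : y \in vis by move: Hy; rewrite in_cons => /orP [/eqP|].
  move=> k0 /(Hvis y Hy') H s0 Hs0; apply: H; lia.
Qed.

Lemma bC_correct k : forall vis x sigma, uniq vis -> #|Q| <= k + size vis ->
  ((forall y, y \in vis -> tsub (sigma (code y)) (GoodE y)) ->
     tsub (sem (bC k vis x) sigma) (GoodE x)) /\
  (forall n, (forall y, y \in vis -> tsub (GoodEN n y) (sigma (code y))) ->
     tsub (GoodEN n x) (sem (bC k vis x) sigma)).
Proof.
elim: k => [|k IH] vis x sigma Hu Hc /=.
  case: ifP => Hx; first by split => [H|n H]; apply: H.
  by exfalso; apply: (notin_full Hu Hc (negbT Hx)).
case: ifP => Hx; first by split => [H|n H]; apply: H.
have Hu' : uniq (x :: vis) by rewrite /= Hx Hu.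
have Hc' : #|Q| <= k + size (x :: vis) by rewrite /= addnS.
split.
- move=> Hvis g Hg; apply: Hg => h /= [Hac|/sem_bigOr [a [_ [b [Hb [Hhd Hs]]]]]].
    by exists [::]; split; [exact: pre_nil | move: Hac; rewrite /run /=; case: (ac x)].
  move: Hb; rewrite in_set1 => /eqP Eb; subst b.
  have := proj1 (IH (x :: vis) (dl x a) (upd sigma (code x) (GoodE x)) Hu' Hc') _ _ Hs.
  case.
    move=> y Hy; rewrite (upd_vis _ _ Hy); case: eqP => [->|Hne] //.
    by apply: Hvis; move: Hy; rewrite in_cons => /orP [/eqP|].
  move=> s [Hp Ha]; exists (a :: s); split => //; exact/pre_cons.
- move=> n Hvis g Hg S HS.
  suff : forall m, m <= n -> tsub (GoodEN m x) S by move/(_ n (leqnn n)); apply.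
  elim=> [|m IHm] Hm h [[|a s] [Hs Hpre Hac]] //.
  + by apply: HS; left; move: Hac; rewrite /run /=; case: (ac x).
  + by apply: HS; left; move: Hac; rewrite /run /=; case: (ac x).
  move/pre_cons: Hpre => [Hhd Hpre].
  apply: HS; right; apply/sem_bigOr; exists a; split; first exact: mem_enumT.
  exists a; split; first exact: set11.
  split => //.
  apply: (proj2 (IH (x :: vis) (dl x a) (upd sigma (code x) S) Hu' Hc') m).
    move=> y Hy; rewrite (upd_vis _ _ Hy); case: eqP => [->|Hne].
      by apply: IHm; apply: ltnW.
    have Hy' : y \in vis by move: Hy; rewrite in_cons => /orP [/eqP|].
    move=> k0 [s0 [Hs0 Hp0 Ha0]]; apply: (Hvis y Hy'); exists s0; split => //; lia.
  by exists s; split.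
Qed.

Lemma bS_syn k : forall vis x, [/\ is_sHML (bS k vis x), closed_in [seq code y | y <- vis] (bS k vis x)
   & guarded (bS k vis x)].
Proof.
elim: k => [|k IH] vis x /=; case: ifP => Hx //=; try by split => //; exact: map_f.
have H1 : forall P : form Act -> Prop,
   (forall a, P (Box [set a] (bS k (x :: vis) (dl x a)))) -> P (Tt Act) ->
   (forall f r, P f -> P r -> P (And f r)) ->
   P (bigAnd [seq Box [set a] (bS k (x :: vis) (dl x a)) | a <- enum Act]).
  move=> P Hb Ht Ha; elim: (enum Act) => //= a l IHl; exact: Ha.
split.
- split; first by case: (ac x).
  apply: (H1 (fun f => is_sHML f)) => // a /=; by case: (IH (x :: vis) (dl x a)).
- split; first by case: (ac x).
  apply: (H1 (fun f => closed_in (code x :: [seq code y | y <- vis]) f)) => // a /=.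
  by case: (IH (x :: vis) (dl x a)).
- split; first split; first by case: (ac x).
  + by apply: (H1 (fun f => guarded_in (code x) f)).
  + split; first by case: (ac x).
    apply: (H1 (fun f => guarded f)) => // a /=; by case: (IH (x :: vis) (dl x a)).
Qed.

Lemma bC_syn k : forall vis x, [/\ is_cHML (bC k vis x), closed_in [seq code y | y <- vis] (bC k vis x)
   & guarded (bC k vis x)].
Proof.
elim: k => [|k IH] vis x /=; case: ifP => Hx //=; try by split => //; exact: map_f.
have H1 : forall P : form Act -> Prop,
   (forall a, P (Dia [set a] (bC k (x :: vis) (dl x a)))) -> P (Ff Act) ->
   (forall f r, P f -> P r -> P (Or f r)) ->
   P (bigOr [seq Dia [set a] (bC k (x :: vis) (dl x a)) | a <- enum Act]).
  move=> P Hb Ht Ha; elim: (enum Act) => //= a l IHl; exact: Ha.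
split.
- split; first by case: (ac x).
  apply: (H1 (fun f => is_cHML f)) => // a /=; by case: (IH (x :: vis) (dl x a)).
- split; first by case: (ac x).
  apply: (H1 (fun f => closed_in (code x :: [seq code y | y <- vis]) f)) => // a /=.
  by case: (IH (x :: vis) (dl x a)).
- split; first split; first by case: (ac x).
  + by apply: (H1 (fun f => guarded_in (code x) f)).
  + split; first by case: (ac x).
    apply: (H1 (fun f => guarded f)) => // a /=; by case: (IH (x :: vis) (dl x a)).
Qed.

End Build.

Section Reg.
Variable Act : finType.
Implicit Types (p q : form Act) (sigma : env Act) (g h : ftrace Act) (s t u v w : seq Act).

Fixpoint cl p sigma : seq (form Act * env Act) :=
  (p, sigma) :: match p with
  | Or p1 p2 | And p1 p2 => cl p1 sigma ++ cl p2 sigma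
  | Dia _ q | Box _ q => cl q sigma
  | Min X q => cl q (upd sigma X (sem (Min X q) sigma))
  | Max X q => cl q (upd sigma X (sem (Max X q) sigma))
  | _ => [::]
  end.

Lemma cl_head p sigma : exists r, cl p sigma = (p, sigma) :: r.
Proof. by case: p; eexists. Qed.

Variable phi : form Act.
Hypothesis Hg : guarded phi.

Definition CL := cl phi (@empty_env Act).
Definition incl (l : seq (form Act * env Act)) := forall e, List.In e l -> List.In e CL.
Definition eqv w w' := forall e, List.In e CL ->
  (sem e.1 e.2 (FinT w) <-> sem e.1 e.2 (FinT w')).

Section Cong.
Variables (a : Act) (w w' : seq Act).
Hypothesis Hw : eqv w w'.
Definition congr (S : tset Act) := S (FinT (a :: w)) <-> S (FinT (a :: w')).

Lemma incl_head p sigma : incl (cl p sigma) -> List.In (p, sigma) CL.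
Proof. case: (cl_head p sigma) => r E H; apply: H; rewrite E; by left. Qed.

Lemma lemH p : forall sigma, incl (cl p sigma) -> guarded p ->
  (forall X, ~ guarded_in X p -> congr (sigma X)) -> congr (sem p sigma).
Proof.
elim: p => [||p IHp q IHq|p IHp q IHq|A p IHp|A p IHp|X p IHp|X p IHp|X]
  sigma Hi Hgd HC; rewrite /congr /=.
- done.
- done.
- have h1 := IHp sigma (fun e H => Hi e (or_intror (List.in_or_app _ _ _ (or_introl H))))
    (proj1 Hgd) (fun X H => HC X (fun G => H (proj1 G))).
  have h2 := IHq sigma (fun e H => Hi e (or_intror (List.in_or_app _ _ _ (or_intror H))))
    (proj2 Hgd) (fun X H => HC X (fun G => H (proj2 G))).
  rewrite /congr in h1 h2.
  by split; case=> H; [left; apply/h1 | right; apply/h2 | left; apply/h1 | right; apply/h2].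
- have h1 := IHp sigma (fun e H => Hi e (or_intror (List.in_or_app _ _ _ (or_introl H))))
    (proj1 Hgd) (fun X H => HC X (fun G => H (proj1 G))).
  have h2 := IHq sigma (fun e H => Hi e (or_intror (List.in_or_app _ _ _ (or_intror H))))
    (proj2 Hgd) (fun X H => HC X (fun G => H (proj2 G))).
  rewrite /congr in h1 h2.
  by split; case=> H1 H2; split; [apply/h1|apply/h2|apply/h1|apply/h2].
- have e := Hw (incl_head (fun e H => Hi e (or_intror H))); rewrite /= in e.
  split; case=> b [Hb [Hh Hs]]; exists b; do 2 (split => //); by apply/e.
- have e := Hw (incl_head (fun e H => Hi e (or_intror H))); rewrite /= in e.
  by split => H b Hb Hh; apply/e; exact: (H b Hb Hh).
- apply: (iff_trans (unfold_min X p sigma (FinT (a :: w)))).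
  apply: iff_sym; apply: (iff_trans (unfold_min X p sigma (FinT (a :: w')))); apply: iff_sym.
  change (congr (sem p (upd sigma X (sem (Min X p) sigma)))).
  apply: IHp; first by move=> e H; apply: Hi; right.
    exact: (proj2 Hgd).
  move=> Y HY; rewrite /upd; case: eqP => [E|NE].
    by subst Y; case: HY; exact: (proj1 Hgd).
  by apply: HC => /= [[E|G]] //; apply: NE.
- apply: (iff_trans (unfold_max X p sigma (FinT (a :: w)))).
  apply: iff_sym; apply: (iff_trans (unfold_max X p sigma (FinT (a :: w')))); apply: iff_sym.
  change (congr (sem p (upd sigma X (sem (Max X p) sigma)))).
  apply: IHp; first by move=> e H; apply: Hi; right.
    exact: (proj2 Hgd).
  move=> Y HY; rewrite /upd; case: eqP => [E|NE].
    by subst Y; case: HY; exact: (proj1 Hgd).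
  by apply: HC => /= [[E|G]] //; apply: NE.
- by apply: HC => /=.
Qed.

Lemma lemAll p : forall sigma, incl (cl p sigma) -> guarded p ->
  (forall X, congr (sigma X)) -> forall e, List.In e (cl p sigma) -> congr (sem e.1 e.2).
Proof.
elim: p => [||p IHp q IHq|p IHp q IHq|A p IHp|A p IHp|X p IHp|X p IHp|X]
  sigma Hi Hgd HC e /= [<-|He];
  try (by apply: lemH => // Y _; exact: HC); try (by case: He).
- case: (List.in_app_or _ _ _ He) => {}He.
    apply: (IHp sigma) => //; [move=> e' H; apply: Hi; right; apply: List.in_or_app; by left
      | exact: (proj1 Hgd)].
  apply: (IHq sigma) => //; [move=> e' H; apply: Hi; right; apply: List.in_or_app; by right
      | exact: (proj2 Hgd)].
- case: (List.in_app_or _ _ _ He) => {}He.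
    apply: (IHp sigma) => //; [move=> e' H; apply: Hi; right; apply: List.in_or_app; by left
      | exact: (proj1 Hgd)].
  apply: (IHq sigma) => //; [move=> e' H; apply: Hi; right; apply: List.in_or_app; by right
      | exact: (proj2 Hgd)].
- apply: (IHp sigma) => // e' H; apply: Hi; by right.
- apply: (IHp sigma) => // e' H; apply: Hi; by right.
- apply: IHp He; [move=> e' H; apply: Hi; by right | exact: (proj2 Hgd) |].
  move=> Y; rewrite /upd; case: eqP => _; last exact: HC.
  change (congr (sem (Min X p) sigma)); apply: lemH => // Y' _; exact: HC.
- apply: IHp He; [move=> e' H; apply: Hi; by right | exact: (proj2 Hgd) |].
  move=> Y; rewrite /upd; case: eqP => _; last exact: HC.
  change (congr (sem (Max X p) sigma)); apply: lemH => // Y' _; exact: HC.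
Qed.

End Cong.

Lemma eqv_cons a w w' : eqv w w' -> eqv (a :: w) (a :: w').
Proof.
move=> H e He; apply: (lemAll H (p := phi) (sigma := @empty_env Act)) => //.
Qed.

Lemma eqv_cat u w w' : eqv w w' -> eqv (u ++ w) (u ++ w').
Proof. elim: u => //= a u IH H; exact: eqv_cons (IH H). Qed.

End Reg.

Definition dec (P : Prop) : bool := if excluded_middle_informative P then true else false.
Lemma decP (P : Prop) : dec P <-> P.
Proof. by rewrite /dec; case: excluded_middle_informative. Qed.
Lemma dec_iff (P P' : Prop) : (P <-> P') -> dec P = dec P'.
Proof.
move=> H; rewrite /dec; case: excluded_middle_informative => h1;
  case: excluded_middle_informative => h2 //; exfalso; tauto.
Qed.

Section DFA.
Variable Act : finType.
Variable phi : form Act.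
Hypothesis Hg : guarded phi.
Implicit Types (s t u v w : seq Act).

Definition NN := List.length (CL phi).
Definition dflt : form Act * env Act := (Tt Act, @empty_env Act).
Definition T := {ffun 'I_NN -> bool}.
Definition typ w : T :=
  [ffun i : 'I_NN => dec (sem (List.nth i (CL phi) dflt).1 (List.nth i (CL phi) dflt).2 (FinT w))].

Lemma typ_eq w w' : typ w = typ w' <-> eqv phi w w'.
Proof.
split.
- move=> H e He; case: (List.In_nth _ _ dflt He) => n [Hn En]; rewrite -En.
  have := congr1 (fun f : T => f (Ordinal (introT ltP Hn))) H; rewrite !ffunE /=.
  move=> E; split => X; apply/decP; [rewrite -E | rewrite E]; exact/decP.
- move=> H; apply/ffunP => i; rewrite !ffunE; apply: dec_iff; apply: H.
  apply: List.nth_In; apply/ltP; exact: ltn_ord.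
Qed.

Lemma typ_cat u v v' : typ v = typ v' -> typ (u ++ v) = typ (u ++ v').
Proof. move/typ_eq => H; apply/typ_eq; exact: eqv_cat. Qed.

Lemma NN_pos : 0 < NN.
Proof. rewrite /NN /CL; case: (cl_head phi (@empty_env Act)) => r ->; by []. Qed.

Definition i0 : 'I_NN := Ordinal NN_pos.

Lemma typ_i0 w : typ w i0 <-> semF phi (FinT w).
Proof.
rewrite ffunE /= /CL; case: (cl_head phi (@empty_env Act)) => r ->; exact: decP.
Qed.

Definition rep (tau : T) : seq Act :=
  match excluded_middle_informative (exists v, typ v = tau) with
  | left H => proj1_sig (constructive_indefinite_description _ H)
  | right _ => [::]
  end.

Lemma rep_typ v : typ (rep (typ v)) = typ v.
Proof.
rewrite /rep; case: excluded_middle_informative => [H|H].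
  by case: constructive_indefinite_description.
by exfalso; apply: H; exists v.
Qed.

Definition QQ := {ffun T -> T}.
Definition delta (f : QQ) (a : Act) : QQ := [ffun tau => f (typ (a :: rep tau))].
Definition q0 : QQ := [ffun tau => typ (rep tau)].
Definition accQ (f : QQ) : bool := f (typ [::]) i0.

Definition Rep (f : QQ) u := forall v, f (typ v) = typ (u ++ v).

Lemma run_Rep s : forall f u, Rep f u -> Rep (run delta f s) (u ++ s).
Proof.
elim: s => [|a s IH] f u H; first by rewrite cats0.
rewrite /run /= -cat_rcons; apply: IH => v.
rewrite ffunE H -!cats1 -!catA /=.
rewrite -[u ++ a :: rep _]/(u ++ [:: a] ++ rep (typ v)) !catA.
rewrite -[u ++ a :: v]/(u ++ [:: a] ++ v) catA; apply: typ_cat; exact: rep_typ.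
Qed.

Lemma acc_run s : accQ (run delta q0 s) <-> semF phi (FinT s).
Proof.
have H : Rep q0 [::] by move=> v; rewrite ffunE rep_typ.
rewrite /accQ (run_Rep s H) /= cats0; exact: typ_i0.
Qed.

End DFA.

Section Final.
Variable Act : finType.
Implicit Types (s t : seq Act) (g : ftrace Act).

Lemma safety_char (m : mon Act) (phi : form Act) :
  sound m phi -> viol_complete m phi ->
  forall g, semF phi g <-> (forall s, is_prefix s g -> semF phi (FinT s)).
Proof.
move=> Hs Hv g; split.
- move=> Hg s Hp; apply: NNPP => Hn.
  case: (Hv _ Hn) => s' [Hp' Hw].
  apply: (proj1 (Hs g)) Hg; exists s'; split => //; exact: pre_trans Hp' Hp.
- move=> H; apply: NNPP => Hn; case: (Hv _ Hn) => s [Hp Hw].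
  apply: (proj1 (Hs (FinT s))) (H s Hp); exists s; split => //; exact: pre_self.
Qed.

Lemma cosafety_char (m : mon Act) (phi : form Act) :
  sound m phi -> sat_complete m phi ->
  forall g, semF phi g <-> (exists s, is_prefix s g /\ semF phi (FinT s)).
Proof.
move=> Hs Hv g; split.
- move=> Hg; case: (Hv _ Hg) => s [Hp Hw]; exists s; split => //.
  apply: (proj2 (Hs (FinT s))); exists s; split => //; exact: pre_self.
- case=> s [Hp Hf]; case: (Hv _ Hf) => s' [Hp' Hw].
  apply: (proj2 (Hs g)); exists s'; split => //; exact: pre_trans Hp' Hp.
Qed.

End Final.

Theorem mainTheorem12 (Act : finType) (phi : form Act) :
  closedF phi -> guarded phi ->
  ((exists m : mon Act, reactive m /\ sound m phi /\ viol_complete m phi) ->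
     exists psi : form Act, is_sHML psi /\ closedF psi /\ guarded psi /\
       (forall g, semF psi g <-> semF phi g)) /\
  ((exists m : mon Act, reactive m /\ sound m phi /\ sat_complete m phi) ->
     exists psi : form Act, is_cHML psi /\ closedF psi /\ guarded psi /\
       (forall g, semF psi g <-> semF phi g)).
Proof.
move=> _ Hg; split.
- case=> m [_ [Hs Hv]].
  exists (bS (@delta Act phi) (@accQ Act phi) #|@QQ Act phi| [::] (@q0 Act phi)).
  case: (bS_syn (@delta Act phi) (@accQ Act phi) #|@QQ Act phi| [::] (@q0 Act phi)) => H1 H2 H3.
  do 3 (split => //).
  move=> g; rewrite (safety_char Hs Hv g).
  have [L U] := bS_correct (@delta Act phi) (@accQ Act phi) (k:=#|@QQ Act phi|) (vis:=[::]) (@q0 Act phi) (@empty_env Act)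
    (isT : uniq [::]) (eq_leq (esym (addn0 _))).
  split.
  + move=> Hp s Hpre; apply/(acc_run Hg).
    have Hn : forall y, y \in [::] -> tsub (@empty_env Act (code y)) (GoodN (@delta Act phi) (@accQ Act phi) (size s) y).
      by move=> y; rewrite in_nil.
    exact: (U (size s) Hn g Hp s (leqnn _) Hpre).
  + move=> H; apply: L; first by move=> y; rewrite in_nil.
    move=> s Hpre; apply/(acc_run Hg); exact: H.
- case=> m [_ [Hs Hv]].
  exists (bC (@delta Act phi) (@accQ Act phi) #|@QQ Act phi| [::] (@q0 Act phi)).
  case: (bC_syn (@delta Act phi) (@accQ Act phi) #|@QQ Act phi| [::] (@q0 Act phi)) => H1 H2 H3.
  do 3 (split => //).
  move=> g; rewrite (cosafety_char Hs Hv g).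
  have [U L] := bC_correct (@delta Act phi) (@accQ Act phi) (k:=#|@QQ Act phi|) (vis:=[::]) (@q0 Act phi) (@empty_env Act)
    (isT : uniq [::]) (eq_leq (esym (addn0 _))).
  split.
  + move=> Hp; case: (U (fun y => ltac:(by rewrite in_nil)) g Hp) => s [Hpre Ha].
    by exists s; split => //; apply/(acc_run Hg).
  + case=> s [Hpre Hf]; apply: (L (size s)); first by move=> y; rewrite in_nil.
    by exists s; split => //; apply/(acc_run Hg).
Qed.
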